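(* The open $\frac{\pi}{2}$-thickening $B_{\frac{\pi}{2}}(\mathbb{S}^1,\mathbf{E}(\mathbb{S}^1))=\{f\in\mathbf{E}(\mathbb{S}^1):\exists\,\theta\in\mathbb{S}^1\text{ with }\|f-d_{\mathbb{S}^1}(\theta,\cdot)\|_\infty<\frac{\pi}{2}\}$ is contractible.
   Context: $\mathbb{S}^1=\mathbb{R}/2\pi$ with its geodesic metric $d_{\mathbb{S}^1}$. For a metric space $(X,d_X)$, $\Delta(X)=\{f:X\to\mathbb{R}\text{ bounded}: f(x)+f(x')\ge d_X(x,x')\ \forall x,x'\}$, and the tight span $\mathbf{E}(X)$ is the set of pointwise-minimal elements of $\Delta(X)$ with the sup-norm metric. $\mathbb{S}^1$ is regarded as a subspace of $\mathbf{E}(\mathbb{S}^1)$ via $\theta\mapsto d_{\mathbb{S}^1}(\theta,\cdot)$. *)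

(* Defs.v *)
From Stdlib Require Import Reals.
From Coquelicot Require Import Coquelicot.
Open Scope R_scope.

(* S^1 = R / 2pi Z, represented by the fundamental domain [0, 2pi). *)
Definition S1 : Type := { x : R | 0 <= x < 2 * PI }.

Definition dS1 (a b : S1) : R :=
  Rmin (Rabs (proj1_sig a - proj1_sig b)) (2 * PI - Rabs (proj1_sig a - proj1_sig b)).

Definition bounded_fun (f : S1 -> R) : Prop :=
  exists M : R, forall x, Rabs (f x) <= M.

Definition Delta (f : S1 -> R) : Prop :=
  bounded_fun f /\ forall x x' : S1, f x + f x' >= dS1 x x'.

Definition tight_span (f : S1 -> R) : Prop :=
  Delta f /\ forall g : S1 -> R, Delta g -> (forall x, g x <= f x) -> forall x, g x = f x.

Definition supdist (f g : S1 -> R) : Rbar :=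
  Lub_Rbar (fun r => exists x : S1, r = Rabs (f x - g x)).

Definition dist_fun (theta : S1) : S1 -> R := fun x => dS1 theta x.

Definition thickening (f : S1 -> R) : Prop :=
  tight_span f /\ exists theta : S1, Rbar_lt (supdist f (dist_fun theta)) (Finite (PI / 2)).

Definition contractible (X : (S1 -> R) -> Prop) : Prop :=
  exists (x0 : S1 -> R) (H : (S1 -> R) -> R -> (S1 -> R)),
    X x0 /\
    (forall f t, X f -> 0 <= t <= 1 -> X (H f t)) /\
    (forall f, X f -> H f 0 = f) /\
    (forall f, X f -> H f 1 = x0) /\
    (forall f t, X f -> 0 <= t <= 1 ->
       forall eps, 0 < eps -> exists delta, 0 < delta /\
         forall g s, X g -> 0 <= s <= 1 ->
           Rbar_lt (supdist f g) (Finite delta) -> Rabs (t - s) < delta ->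
           Rbar_lt (supdist (H f t) (H g s)) (Finite eps)).

(* Main.v *)
Require Import Defs.
From Stdlib Require Import Reals Lra Psatz ProofIrrelevance FunctionalExtensionality.
From Coquelicot Require Import Coquelicot.
Open Scope R_scope.

Lemma S1_ext (a b : S1) : proj1_sig a = proj1_sig b -> a = b.
Proof.
  destruct a as [a pa], b as [b pb]; simpl; intros ->.
  f_equal; apply proof_irrelevance.
Qed.

Ltac dcase := unfold dS1, Rmin in *; simpl in *; repeat destruct Rle_dec;
  unfold Rabs in *; repeat destruct Rcase_abs;
  repeat match goal with H : _ /\ _ |- _ => destruct H end; try split; try lra.

Lemma PI_gt0 : 0 < PI. Proof. exact PI_RGT_0. Qed.

Lemma dS1_sym a b : dS1 a b = dS1 b a.
Proof. destruct a as [a pa], b as [b pb]; simpl. dcase. Qed.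

Lemma dS1_tri a b c : dS1 a c <= dS1 a b + dS1 b c.
Proof. pose proof PI_gt0. destruct a as [a pa], b as [b pb], c as [c pc]; simpl. dcase. Qed.

Lemma dS1_bnd a b : 0 <= dS1 a b <= PI.
Proof. pose proof PI_gt0. destruct a as [a pa], b as [b pb]; simpl. dcase. Qed.

Lemma dS1_refl a : dS1 a a = 0.
Proof. pose proof PI_gt0. destruct a as [a pa]; simpl. dcase. Qed.

Lemma dS1_val a b : dS1 a b <= Rabs (proj1_sig a - proj1_sig b).
Proof. pose proof PI_gt0. destruct a as [a pa], b as [b pb]; simpl. dcase. Qed.

Definition antr (x : R) : R := if Rlt_dec x PI then x + PI else x - PI.

Lemma antr_range x : 0 <= x < 2 * PI -> 0 <= antr x < 2 * PI.
Proof. unfold antr; destruct Rlt_dec; lra. Qed.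

Definition ant (x : S1) : S1 := exist _ (antr (proj1_sig x)) (antr_range _ (proj2_sig x)).

Lemma dS1_ant x y : dS1 x y + dS1 (ant x) y = PI.
Proof. pose proof PI_gt0. destruct x as [x px], y as [y py]; unfold dS1, ant; simpl.
  unfold antr; destruct Rlt_dec; dcase. Qed.

Definition Lip (f : S1 -> R) := forall x z, f x <= f z + dS1 x z.
Definition Anti (f : S1 -> R) := forall x, f x + f (ant x) = PI.

Lemma d_ant x : dS1 (ant x) x = PI.
Proof. pose proof (dS1_ant x x). rewrite dS1_refl in H. lra. Qed.

Lemma tight_Lip f : tight_span f -> Lip f.
Proof.
  intros [[[M HM] HD] Hmin] x z.
  destruct (Rle_dec (f x) (f z + dS1 x z)) as [h|h]; [exact h|exfalso].
  set (g := fun y => if Req_EM_T (proj1_sig y) (proj1_sig x) then f z + dS1 x z else f y).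
  assert (Hz : 0 <= f z). { pose proof (HD z z). rewrite dS1_refl in H. lra. }
  assert (Hdv : forall y, proj1_sig y = proj1_sig x -> forall w, dS1 y w = dS1 x w).
  { intros y Hy w. unfold dS1. rewrite Hy. reflexivity. }
  assert (Dg : Defs.Delta g).
  { split.
    - exists (M + PI). intro y. unfold g. destruct Req_EM_T.
      + pose proof (dS1_bnd x z). pose proof (HM z). unfold Rabs in *.
        destruct Rcase_abs; destruct Rcase_abs; lra.
      + pose proof (HM y). pose proof PI_gt0. lra.
    - intros y y'. unfold g. destruct Req_EM_T as [e|e]; destruct Req_EM_T as [e'|e'].
      + rewrite (Hdv y e). rewrite (dS1_sym x y'). rewrite (Hdv y' e'). rewrite dS1_refl.
        pose proof (dS1_bnd x z). lra.
      + rewrite (Hdv y e). pose proof (dS1_tri x z y'). pose proof (HD z y'). lra.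
      + rewrite (dS1_sym y y'). rewrite (Hdv y' e'). pose proof (dS1_tri x z y).
        pose proof (HD z y). lra.
      + apply HD. }
  assert (Hle : forall y, g y <= f y).
  { intro y. unfold g. destruct Req_EM_T as [e|e]; [|lra].
    assert (y = x) by (apply S1_ext; exact e). subst. lra. }
  pose proof (Hmin g Dg Hle x). unfold g in H. destruct Req_EM_T; [lra|].
  apply n; reflexivity.
Qed.

Lemma tight_Anti f : tight_span f -> Anti f.
Proof.
  intros T. pose proof (tight_Lip f T) as HL. destruct T as [[[M HM] HD] Hmin]. intro x.
  pose proof (HD x (ant x)) as H1. rewrite dS1_sym, d_ant in H1.
  destruct (Rle_dec (f x + f (ant x)) PI) as [h|h]; [lra|exfalso].
  set (g := fun y => if Req_EM_T (proj1_sig y) (proj1_sig x) then Rmax (PI - f (ant x)) 0 else f y).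
  assert (Hdv : forall y, proj1_sig y = proj1_sig x -> forall w, dS1 y w = dS1 x w).
  { intros y Hy w. unfold dS1. rewrite Hy. reflexivity. }
  assert (Hx0 : 0 < f x).
  { pose proof (HD x x). rewrite dS1_refl in H. pose proof (HL (ant x) x).
    rewrite d_ant in H0. lra. }
  assert (key : forall y', Rmax (PI - f (ant x)) 0 + f y' >= dS1 x y').
  { intro y'. pose proof (HL (ant x) y'). pose proof (dS1_ant x y').
    pose proof (Rmax_l (PI - f (ant x)) 0). lra. }
  assert (Dg : Defs.Delta g).
  { split.
    - exists (M + PI). intro y. unfold g. destruct Req_EM_T.
      + pose proof (HM (ant x)). unfold Rabs, Rmax in *. pose proof PI_gt0.
        repeat destruct Rcase_abs; repeat destruct Rle_dec; lra.
      + pose proof (HM y). pose proof PI_gt0. lra.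
    - intros y y'. unfold g. destruct Req_EM_T as [e|e]; destruct Req_EM_T as [e'|e'].
      + rewrite (Hdv y e). rewrite (dS1_sym x y'). rewrite (Hdv y' e'). rewrite dS1_refl.
        pose proof (Rmax_r (PI - f (ant x)) 0). lra.
      + rewrite (Hdv y e). apply key.
      + rewrite (dS1_sym y y'). rewrite (Hdv y' e'). pose proof (key y). lra.
      + apply HD. }
  assert (Hle : forall y, g y <= f y).
  { intro y. unfold g. destruct Req_EM_T as [e|e]; [|lra].
    assert (y = x) by (apply S1_ext; exact e). subst.
    unfold Rmax; destruct Rle_dec; lra. }
  pose proof (Hmin g Dg Hle x). unfold g in H. destruct Req_EM_T; [|apply n; reflexivity].
  unfold Rmax in H; destruct Rle_dec; lra.
Qed.

Lemma ant_ant x : ant (ant x) = x.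
Proof. apply S1_ext. destruct x as [x [? ?]]. unfold ant, antr; simpl.
  pose proof PI_gt0. repeat destruct Rlt_dec; lra. Qed.

Lemma char_tight f : Lip f -> Anti f -> tight_span f.
Proof.
  intros HL HA.
  assert (HD : forall x y, f x + f y >= dS1 x y).
  { intros x y. pose proof (HA x). pose proof (HL (ant x) y). pose proof (dS1_ant x y). lra. }
  split; [split|].
  - exists PI. intro x. pose proof (HD x x). rewrite dS1_refl in H. pose proof (HA x).
    pose proof (HD (ant x) (ant x)). rewrite dS1_refl in H1.
    rewrite Rabs_right; lra.
  - exact HD.
  - intros g [_ Dg] Hle x. apply Rle_antisym; [apply Hle|].
    pose proof (Dg x (ant x)). rewrite dS1_sym, d_ant in H. pose proof (Hle (ant x)).
    pose proof (HA x). lra.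
Qed.

Lemma Lip_abs f : Lip f -> forall x z, Rabs (f x - f z) <= dS1 x z.
Proof. intros HL x z. pose proof (HL x z). pose proof (HL z x). rewrite dS1_sym in H0.
  unfold Rabs; destruct Rcase_abs; lra. Qed.

Lemma tight_range f : tight_span f -> forall x, 0 <= f x <= PI.
Proof. intros T x. pose proof (tight_Anti f T x). destruct T as [[_ HD] _].
  pose proof (HD x x). pose proof (HD (ant x) (ant x)). rewrite dS1_refl in *. lra. Qed.

Lemma supdist_le F G c : (forall x, Rabs (F x - G x) <= c) -> Rbar_le (supdist F G) (Finite c).
Proof.
  intro H. unfold supdist. destruct (Lub_Rbar_correct (fun r => exists x : S1, r = Rabs (F x - G x))) as [_ Hl].
  apply Hl. intros r [x ->]. simpl. apply H.
Qed.

Lemma supdist_ge F G x : Rbar_le (Finite (Rabs (F x - G x))) (supdist F G).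
Proof.
  unfold supdist. destruct (Lub_Rbar_correct (fun r => exists x : S1, r = Rabs (F x - G x))) as [Hu _].
  apply Hu. exists x. reflexivity.
Qed.

Lemma supdist_lt F G d x : Rbar_lt (supdist F G) (Finite d) -> Rabs (F x - G x) < d.
Proof. intro H. pose proof (Rbar_le_lt_trans _ _ _ (supdist_ge F G x) H). exact H0. Qed.

Lemma thick_of f th : tight_span f -> f th < PI / 2 -> thickening f.
Proof.
  intros T Hth. split; [exact T|]. exists th.
  apply Rbar_le_lt_trans with (Finite (f th)); [|exact Hth].
  apply supdist_le. intro x. unfold dist_fun.
  pose proof (tight_Lip f T x th). destruct T as [[_ HD] _]. pose proof (HD th x).
  rewrite dS1_sym in H. unfold Rabs; destruct Rcase_abs; lra.
Qed.

Lemma thick_pt f : thickening f -> exists th, f th < PI / 2.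
Proof.
  intros [_ [th H]]. exists th. pose proof (supdist_lt _ _ _ th H). unfold dist_fun in H0.
  rewrite dS1_refl in H0. rewrite Rminus_0_r in H0. pose proof (Rle_abs (f th)). lra.
Qed.

Definition sw (x : R) : R :=
  if Rlt_dec x PI then Rabs (x - PI/2) - PI/2 else Rabs (x - 3*PI/2) - PI/2.

Lemma sw_bnd x : 0 <= x < 2*PI ->
  -(PI/2) <= sw x <= 0 /\ (x < PI -> 0 <= x + sw x) /\ (PI <= x -> PI <= x + sw x).
Proof. intros [? ?]. pose proof PI_gt0. unfold sw. destruct Rlt_dec; unfold Rabs;
  repeat destruct Rcase_abs; repeat split; intros; lra. Qed.

Lemma sw_lip x y : 0 <= x -> x <= y -> y < 2*PI ->
  Rabs (sw y - sw x) <= y - x /\ Rabs (sw y - sw x) <= x + 2*PI - y.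
Proof. intros. pose proof PI_gt0. unfold sw. repeat destruct Rlt_dec; unfold Rabs;
  repeat destruct Rcase_abs; split; lra. Qed.

Definition clamp (a : R) : R := Rmax 0 (Rmin a 1).
Lemma clamp_rng a : 0 <= clamp a <= 1.
Proof. unfold clamp, Rmax, Rmin; repeat destruct Rle_dec; lra. Qed.
Lemma clamp_id a : 0 <= a <= 1 -> clamp a = a.
Proof. unfold clamp, Rmax, Rmin; repeat destruct Rle_dec; lra. Qed.

Definition psi (a x : R) : R := x + clamp a * sw x.

Lemma psi_range a x : 0 <= x < 2*PI -> 0 <= psi a x < 2*PI /\ (x < PI <-> psi a x < PI).
Proof. intros Hx. pose proof (sw_bnd x Hx) as [[S1a S1b] [S2 S3]]. pose proof (clamp_rng a).
  unfold psi. set (c := clamp a) in *. set (s := sw x) in *. destruct Hx.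
  assert (c * s <= 0) by nra. assert (s <= c * s) by nra.
  destruct (Rlt_dec x PI).
  - specialize (S2 r). repeat split; intros; lra.
  - assert (Hp : PI <= x) by lra. specialize (S3 Hp). repeat split; intros; lra.
Qed.

Definition Psi (a : R) (x : S1) : S1 :=
  exist _ (psi a (proj1_sig x)) (proj1 (psi_range a _ (proj2_sig x))).

Lemma Psi_ant a x : Psi a (ant x) = ant (Psi a x).
Proof.
  apply S1_ext. destruct x as [x Hx]. unfold Psi, ant; simpl.
  pose proof (psi_range a x Hx) as [_ Hiff]. unfold antr.
  destruct (Rlt_dec x PI) as [h|h]; destruct (Rlt_dec (psi a x) PI) as [h'|h'];
  try (exfalso; tauto).
  - unfold psi, sw. destruct (Rlt_dec (x+PI) PI); [lra|]. destruct (Rlt_dec x PI); [|lra].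
    replace (x + PI - 3 * PI / 2) with (x - PI/2) by lra. lra.
  - unfold psi, sw. destruct (Rlt_dec (x-PI) PI); [|destruct Hx; lra].
    destruct (Rlt_dec x PI); [lra|].
    replace (x - PI - PI / 2) with (x - 3 * PI/2) by lra. lra.
Qed.

Lemma psi_mono a x y : 0 <= x -> x <= y -> y < 2*PI ->
  (1 - clamp a) * (y - x) <= psi a y - psi a x <= (1 + clamp a) * (y - x) /\
  0 <= 2*PI - (psi a y - psi a x) <= (1 + clamp a) * (x + 2*PI - y).
Proof.
  intros. destruct (sw_lip x y H H0 H1) as [A B]. pose proof (clamp_rng a).
  unfold psi. set (c := clamp a) in *. set (u := sw y - sw x) in *.
  assert (-(y-x) <= u <= y - x) by (unfold Rabs in A; destruct Rcase_abs; lra).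
  assert (-(x + 2*PI - y) <= u <= x + 2*PI - y) by (unfold Rabs in B; destruct Rcase_abs; lra).
  replace (y + c * sw y - (x + c * sw x)) with ((y - x) + c * u) by (unfold u; ring).
  assert (c * u <= c * (y - x)) by nra. assert (- (c * (y-x)) <= c * u) by nra.
  assert (c * u <= c * (x + 2*PI - y)) by nra. assert (- (c * (x + 2*PI - y)) <= c * u) by nra.
  repeat split; nra.
Qed.

Lemma Psi_lip a x y : dS1 (Psi a x) (Psi a y) <= (1 + clamp a) * dS1 x y.
Proof.
  assert (gen : forall x y : S1, proj1_sig x <= proj1_sig y ->
            dS1 (Psi a x) (Psi a y) <= (1 + clamp a) * dS1 x y).
  { clear x y. intros [x [Hx1 Hx2]] [y [Hy1 Hy2]]; simpl; intro Hxy.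
    destruct (psi_mono a x y Hx1 Hxy Hy2) as [[A1 A2] [B1 B2]].
    pose proof (clamp_rng a). unfold dS1; simpl.
    set (c := clamp a) in *. set (D := psi a y - psi a x) in *.
    assert (D >= 0) by nra.
    replace (psi a x - psi a y) with (- D) by (unfold D; ring).
    replace (x - y) with (- (y - x)) by ring.
    rewrite !Rabs_Ropp, (Rabs_right D) by lra. rewrite Rabs_right by lra.
    unfold Rmin. destruct (Rle_dec (y - x) (2*PI - (y-x))); destruct Rle_dec; nra. }
  destruct (Rle_dec (proj1_sig x) (proj1_sig y)).
  - apply gen; auto.
  - rewrite dS1_sym, (dS1_sym x). apply gen. lra.
Qed.

Lemma Psi_time a b x : 0 <= a <= 1 -> 0 <= b <= 1 ->
  dS1 (Psi a x) (Psi b x) <= Rabs (a - b) * (PI/2).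
Proof.
  intros Ha Hb. eapply Rle_trans; [apply dS1_val|]. destruct x as [x Hx]; simpl.
  unfold psi. rewrite (clamp_id a Ha), (clamp_id b Hb).
  replace (x + a * sw x - (x + b * sw x)) with ((a - b) * sw x) by ring.
  rewrite Rabs_mult. apply Rmult_le_compat_l; [apply Rabs_pos|].
  pose proof (sw_bnd x Hx) as [[? ?] _]. unfold Rabs; destruct Rcase_abs; lra.
Qed.

Lemma Psi_0 x : Psi 0 x = x.
Proof. apply S1_ext. unfold Psi, psi; simpl. rewrite clamp_id by lra. ring. Qed.

Lemma psi_half_surj a v : 0 <= a <= 1 -> 0 <= v < PI -> exists x, 0 <= x < PI /\ psi a x = v.
Proof.
  intros Ha Hv. pose proof PI_gt0. unfold psi. rewrite clamp_id by lra.
  destruct (Rlt_dec v ((1 - a) * (PI/2))).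
  - assert (1 - a > 0) by nra. exists (v / (1 - a)).
    assert (v / (1 - a) < PI/2).
    { apply (Rmult_lt_reg_r (1 - a)); [lra|]. replace (v / (1 - a) * (1 - a)) with v by (field; lra). lra. }
    assert (0 <= v / (1 - a)) by (apply Rdiv_le_0_compat; lra).
    split; [lra|]. unfold sw. destruct Rlt_dec; [|lra].
    rewrite Rabs_left by lra. field. lra.
  - exists ((v + a * PI) / (1 + a)).
    assert (PI/2 <= (v + a * PI) / (1 + a)).
    { apply (Rmult_le_reg_r (1 + a)); [lra|]. replace ((v + a * PI) / (1 + a) * (1 + a)) with (v + a * PI) by (field; lra). nra. }
    assert ((v + a * PI) / (1 + a) < PI).
    { apply (Rmult_lt_reg_r (1 + a)); [lra|]. replace ((v + a * PI) / (1 + a) * (1 + a)) with (v + a * PI) by (field; lra). nra. }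
    split; [lra|]. unfold sw. destruct Rlt_dec; [|lra].
    rewrite Rabs_right by lra. field. lra.
Qed.

Lemma Psi_surj a y : 0 <= a <= 1 -> exists x, Psi a x = y.
Proof.
  intro Ha. destruct y as [v Hv].
  destruct (Rlt_dec v PI).
  - destruct (psi_half_surj a v Ha) as [x [Hx E]]; [lra|].
    assert (Hx' : 0 <= x < 2 * PI) by (pose proof PI_gt0; lra).
    exists (exist _ x Hx'). apply S1_ext. simpl. exact E.
  - destruct (psi_half_surj a (v - PI) Ha) as [x [Hx E]]; [lra|].
    assert (Hx' : 0 <= x < 2 * PI) by (pose proof PI_gt0; lra).
    set (X := exist (fun x => 0 <= x < 2 * PI) x Hx').
    exists (ant X). rewrite Psi_ant. apply S1_ext. unfold ant, Psi, X; simpl.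
    unfold antr. destruct Rlt_dec; [lra|]. exfalso. apply n0.
    pose proof (psi_range a x Hx') as [_ I]. apply I. lra.
Qed.

Lemma p0_rng : 0 <= 0 < 2 * PI. Proof. pose proof PI_gt0. lra. Qed.
Lemma q0_rng : 0 <= PI/4 < 2 * PI. Proof. pose proof PI_gt0. lra. Qed.
Definition p0 : S1 := exist _ 0 p0_rng.
Definition q0 : S1 := exist _ (PI/4) q0_rng.

Definition aa t := clamp (2 * t).
Definition bb t := clamp (2 * t - 1).

Definition Hm (f : S1 -> R) (t : R) : S1 -> R := fun x =>
  (1 - bb t) * (PI/2 + (f (Psi (aa t) x) - PI/2) * / (1 + aa t)) + bb t * dS1 p0 x.

Lemma clamp_lip a b : Rabs (clamp a - clamp b) <= Rabs (a - b).
Proof. unfold clamp, Rmax, Rmin; repeat destruct Rle_dec; unfold Rabs; repeat destruct Rcase_abs; lra. Qed.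

Lemma d0_tight : tight_span (dist_fun p0).
Proof.
  apply char_tight; unfold dist_fun.
  - intros x z. pose proof (dS1_tri p0 z x). rewrite (dS1_sym z x) in H. lra.
  - intro x. pose proof (dS1_ant x p0). rewrite (dS1_sym x p0), (dS1_sym (ant x) p0) in H. exact H.
Qed.

Lemma d0_thick : thickening (dist_fun p0).
Proof. apply (thick_of _ p0 d0_tight). unfold dist_fun. rewrite dS1_refl. pose proof PI_gt0. lra. Qed.

Lemma Hm_tight f t : tight_span f -> tight_span (Hm f t).
Proof.
  intro T. pose proof (tight_Lip f T) as HL. pose proof (tight_Anti f T) as HA.
  pose proof (clamp_rng (2*t)) as RA. pose proof (clamp_rng (2*t-1)) as RB.
  fold (aa t) in RA. fold (bb t) in RB.
  assert (Hk : 0 < / (1 + aa t)) by (apply Rinv_0_lt_compat; lra).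
  assert (Hk1 : / (1 + aa t) * (1 + aa t) = 1) by (field; lra).
  apply char_tight; unfold Hm.
  - intros x z. set (A := aa t) in *. set (B := bb t) in *. set (k := / (1 + A)) in *.
    pose proof (HL (Psi A x) (Psi A z)). pose proof (Psi_lip A x z).
    rewrite (clamp_id A RA) in H0.
    assert (E : (f (Psi A x) - f (Psi A z)) * k <= dS1 x z).
    { apply Rle_trans with ((1 + A) * dS1 x z * k).
      - apply Rmult_le_compat_r; lra.
      - replace ((1 + A) * dS1 x z * k) with (dS1 x z * (k * (1 + A))) by ring.
        rewrite Hk1. lra. }
    pose proof (dS1_tri p0 z x). rewrite (dS1_sym z x) in H1.
    assert (E2 : (1 - B) * ((f (Psi A x) - f (Psi A z)) * k) <= (1 - B) * dS1 x z)
      by (apply Rmult_le_compat_l; lra).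
    assert (E3 : B * (dS1 p0 x - dS1 p0 z) <= B * dS1 x z) by (apply Rmult_le_compat_l; lra).
    nra.
  - intro x. cbv beta. set (A := aa t). set (B := bb t). rewrite Psi_ant.
    pose proof (HA (Psi A x)). pose proof (dS1_ant x p0).
    rewrite (dS1_sym x p0), (dS1_sym (ant x) p0) in H0.
    replace (f (ant (Psi A x))) with (PI - f (Psi A x)) by lra.
    replace (dS1 p0 (ant x)) with (PI - dS1 p0 x) by lra. field. unfold A; lra.
Qed.

Lemma thick_ne g u : tight_span g -> g u <> PI/2 -> thickening g.
Proof.
  intros T Hu. pose proof (tight_Anti g T u).
  destruct (Rlt_dec (g u) (PI/2)).
  - exact (thick_of g u T r).
  - apply (thick_of g (ant u) T). lra.
Qed.

Lemma Hm_thick f t : thickening f -> 0 <= t <= 1 -> thickening (Hm f t).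
Proof.
  intros Th Ht. pose proof (Hm_tight f t (proj1 Th)) as T.
  destruct (Rle_dec t (1/2)).
  - assert (Eb : bb t = 0) by (unfold bb, clamp, Rmax, Rmin; repeat destruct Rle_dec; lra).
    pose proof (clamp_rng (2*t)) as RA. fold (aa t) in RA.
    destruct (thick_pt f Th) as [th Hth].
    destruct (Psi_surj (aa t) th RA) as [y Hy].
    apply (thick_of _ y T). unfold Hm. rewrite Eb, Hy.
    assert (Hk : 0 < / (1 + aa t)) by (apply Rinv_0_lt_compat; lra).
    assert ((f th - PI/2) * / (1 + aa t) < 0) by nra. nra.
  - assert (Ea : aa t = 1) by (unfold aa, clamp, Rmax, Rmin; repeat destruct Rle_dec; lra).
    assert (RB : 0 < bb t) by (unfold bb, clamp, Rmax, Rmin; repeat destruct Rle_dec; lra).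
    assert (EP : Psi (aa t) p0 = Psi (aa t) q0).
    { apply S1_ext. rewrite Ea. unfold Psi, psi, sw; simpl. rewrite clamp_id by lra.
      pose proof PI_gt0. repeat destruct Rlt_dec; try lra.
      unfold Rabs; repeat destruct Rcase_abs; lra. }
    assert (D : dS1 p0 q0 = PI/4).
    { pose proof PI_gt0. unfold p0, q0. dcase. }
    destruct (Req_EM_T (Hm f t p0) (PI/2)) as [e|e].
    + apply (thick_ne _ q0 T). intro e'. unfold Hm in e, e'. rewrite <- EP in e'.
      rewrite D in e'. rewrite dS1_refl in e. assert (bb t * (PI/4) = 0) by lra. pose proof PI_gt0. nra.
    + exact (thick_ne _ p0 T e).
Qed.

Lemma Hm_0 f : Hm f 0 = f.
Proof.
  apply functional_extensionality. intro x. unfold Hm.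
  assert (aa 0 = 0) by (unfold aa; rewrite Rmult_0_r; apply clamp_id; lra).
  assert (bb 0 = 0) by (unfold bb, clamp, Rmax, Rmin; repeat destruct Rle_dec; lra).
  rewrite H, H0, Psi_0. field.
Qed.

Lemma Hm_1 f : Hm f 1 = dist_fun p0.
Proof.
  apply functional_extensionality. intro x. unfold Hm, dist_fun.
  assert (bb 1 = 1) by (unfold bb; replace (2*1-1) with 1 by ring; apply clamp_id; lra). rewrite H. ring.
Qed.

Lemma abs_mul_le x y a b : Rabs x <= a -> Rabs y <= b -> Rabs (x * y) <= a * b.
Proof. intros. rewrite Rabs_mult. apply Rmult_le_compat; auto using Rabs_pos. Qed.

Lemma Hm_bound f g t s e : tight_span f -> (forall y, Rabs (f y - g y) <= e) ->
  forall x, Rabs (Hm f t x - Hm g s x) <= 4 * PI * Rabs (t - s) + e.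
Proof.
  intros T Hfg x. pose proof PI_gt0 as Hpi.
  pose proof (tight_range f T) as Rf. pose proof (tight_Lip f T) as HL.
  pose proof (clamp_rng (2*t)) as RA. pose proof (clamp_rng (2*t-1)) as RB.
  pose proof (clamp_rng (2*s)) as RA'. pose proof (clamp_rng (2*s-1)) as RB'.
  pose proof (clamp_lip (2*t) (2*s)) as LA. pose proof (clamp_lip (2*t-1) (2*s-1)) as LB.
  replace (2*t - 2*s) with (2*(t-s)) in LA by ring.
  replace (2*t - 1 - (2*s - 1)) with (2*(t-s)) in LB by ring.
  rewrite Rabs_mult, (Rabs_right 2) in LA, LB by lra.
  fold (aa t) (bb t) (aa s) (bb s) in *.
  pose proof (Psi_time (aa t) (aa s) x RA RA') as PT.
  unfold Hm.
  set (A := aa t) in *. set (A' := aa s) in *. set (B := bb t) in *. set (B' := bb s) in *.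
  set (w := Psi A x) in *. set (w' := Psi A' x) in *.
  set (k := / (1 + A)). set (k' := / (1 + A')).
  assert (Hk : 0 < k <= 1).
  { split. apply Rinv_0_lt_compat; lra. unfold k. rewrite <- Rinv_1. apply Rinv_le_contravar; lra. }
  assert (Hk' : 0 < k' <= 1).
  { split. apply Rinv_0_lt_compat; lra. unfold k'. rewrite <- Rinv_1. apply Rinv_le_contravar; lra. }
  assert (Ekk : k - k' = (A' - A) * (k * k')) by (unfold k, k'; field; lra).
  assert (Bkk : Rabs (k - k') <= Rabs (A - A')).
  { rewrite Ekk. rewrite <- (Rmult_1_r (Rabs (A - A'))). apply abs_mul_le.
    rewrite <- Rabs_Ropp. right. f_equal. ring. rewrite Rabs_right by nra. nra. }
  assert (Bff : Rabs (f w - f w') <= Rabs (A - A') * (PI/2)).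
  { eapply Rle_trans; [apply Lip_abs; exact HL|]. exact PT. }
  set (d := dS1 p0 x).
  assert (Rd : 0 <= d <= PI) by apply dS1_bnd.
  set (u := PI/2 + (f w - PI/2) * k). set (u' := PI/2 + (f w' - PI/2) * k').
  set (v' := PI/2 + (g w' - PI/2) * k').
  assert (Ru' : 0 <= u' <= PI).
  { specialize (Rf w'). unfold u'. destruct Rf.
    assert (-(PI/2) <= (f w' - PI/2) * k' <= PI/2) by nra. lra. }
  assert (E : (1 - B) * u + B * d - ((1 - B') * v' + B' * d) =
              (1 - B) * (u - u') + (B - B') * (d - u') + (1 - B') * (u' - v')) by ring.
  rewrite E.
  assert (T1 : Rabs ((f w - f w') * k) <= (Rabs (A - A') * (PI/2)) * 1).
  { apply abs_mul_le; auto. rewrite Rabs_right; lra. }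
  assert (T2 : Rabs ((f w' - PI/2) * (k - k')) <= (PI/2) * Rabs (A - A')).
  { apply abs_mul_le; auto. specialize (Rf w'). unfold Rabs; destruct Rcase_abs; lra. }
  assert (Uu : Rabs (u - u') <= 2 * PI * Rabs (t - s)).
  { replace (u - u') with ((f w - f w') * k + (f w' - PI/2) * (k - k')) by (unfold u, u'; ring).
    eapply Rle_trans; [apply Rabs_triang|]. nra. }
  assert (T3 : Rabs ((1 - B) * (u - u')) <= 1 * (2 * PI * Rabs (t - s))).
  { apply abs_mul_le; auto. unfold Rabs; destruct Rcase_abs; lra. }
  assert (T4 : Rabs ((B - B') * (d - u')) <= (2 * Rabs (t - s)) * PI).
  { apply abs_mul_le; auto. unfold Rabs; destruct Rcase_abs; lra. }
  assert (T5 : Rabs ((1 - B') * (u' - v')) <= 1 * (e * 1)).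
  { apply abs_mul_le. unfold Rabs; destruct Rcase_abs; lra.
    replace (u' - v') with ((f w' - g w') * k') by (unfold u', v'; ring).
    apply abs_mul_le; auto. rewrite Rabs_right; lra. }
  eapply Rle_trans; [apply Rabs_triang|].
  eapply Rle_trans; [apply Rplus_le_compat_r; apply Rabs_triang|]. lra.
Qed.

Theorem proposition3p22 : contractible thickening.
Proof.
  exists (dist_fun p0), Hm.
  split; [exact d0_thick|].
  split; [intros f t Xf Ht; apply Hm_thick; auto|].
  split; [intros f _; apply Hm_0|].
  split; [intros f _; apply Hm_1|].
  intros f t Xf Ht eps Heps. pose proof PI_gt0 as Hpi.
  set (dl := eps / (2 * (4 * PI + 1))).
  assert (Hdl : 0 < dl) by (unfold dl; apply Rdiv_lt_0_compat; lra).
  assert (Edl : (4 * PI + 1) * dl = eps / 2) by (unfold dl; field; lra).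
  exists dl. split; [exact Hdl|].
  intros g s Xg Hs Hfg Hts.
  apply Rbar_le_lt_trans with (Finite (eps / 2)); [|simpl; lra].
  apply supdist_le. intro x.
  eapply Rle_trans; [apply (Hm_bound f g t s dl (proj1 Xf))|].
  - intro y. left. exact (supdist_lt _ _ _ y Hfg).
  - nra.
Qed.
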